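(* Let $(F_k)_{k\geq1}$ be a sequence of cumulative distribution functions on $\mathbb{R}$ and $F$ a cumulative distribution function such that $F_k(x)^k\to F(x)$ as $k\to\infty$ at every point $x$ where $F$ is continuous. Then at every such $x$, $F_k^{\Box\!\vee k}(x)\to\max(0,1+\log F(x))$ as $k\to\infty$.
   Context: For cumulative distribution functions $F,G$, the free upper extremal convolution is $F\,\Box\!\vee\, G=\max(0,F+G-1)$ (pointwise), and $F^{\Box\!\vee k}=F\,\Box\!\vee\cdots\Box\!\vee\, F$ ($k$ factors, taken iteratively). Convention: $\log 0=-\infty$, so $\max(0,1+\log 0)=0$. *)

(* Defs.v *)
From HB Require Import structures.
From mathcomp Require Import all_boot all_order all_algebra.
From mathcomp Require Import all_classical all_reals all_analysis.
Set Implicit Arguments. Unset Strict Implicit. Unset Printing Implicit Defensive.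
Import Order.TTheory GRing.Theory Num.Theory.
Import numFieldNormedType.Exports.
Local Open Scope ring_scope.
Local Open Scope classical_set_scope.

Definition is_cdf (R : realType) (F : R -> R) : Prop :=
  {homo F : x y / x <= y} /\
  (forall x : R, F y @[y --> x^'+] --> F x) /\
  (F x @[x --> -oo] --> (0 : R)) /\
  (F x @[x --> +oo] --> (1 : R)).

Definition fmaxconv (R : realType) (F G : R -> R) : R -> R :=
  fun x => Num.max 0 (F x + G x - 1).

(* fmaxpow F k = F box-vee ... box-vee F with k factors (k >= 1),
   taken iteratively: F^{k+1} = F^{k} box-vee F.  (k = 0 returns F; unused.) *)
Fixpoint fmaxpow (R : realType) (F : R -> R) (k : nat) : R -> R :=
  match k with
  | 0%N => F
  | 1%N => F
  | k'.+1 => fmaxconv (fmaxpow F k') F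
  end.

(* max(0, 1 + log y) with the convention log 0 = -oo (so the value is 0 at y = 0).
   For y in [0,1] (values of a cdf) this is the intended quantity. *)
Definition onePlusLogPos (R : realType) (y : R) : R :=
  if y == 0 then 0 else Num.max 0 (1 + ln y).

(* Main.v *)
Require Import Defs.
From HB Require Import structures.
From mathcomp Require Import all_boot all_order all_algebra.
From mathcomp Require Import all_classical all_reals all_analysis.
From mathcomp Require Import ring lra.
Import Order.TTheory GRing.Theory Num.Theory.
Import numFieldNormedType.Exports.
Local Open Scope ring_scope.
Local Open Scope classical_set_scope.

Lemma cdf_ge0 (R : realType) (G : R -> R) : is_cdf G -> forall x, 0 <= G x.
Proof.
move=> [hom [_ [hN _]]] x.
rewrite leNgt; apply/negP => Gx.
have h1 : \forall t \near -oo, G x < G t by apply: cvgr_gt hN _ Gx.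
have h2 : \forall y \near -oo, y <= x.
  by exists x; split; [exact: num_real| move=> y /ltW].
have [y [/= H1 H2]] := filter_ex (filterI h1 h2).
by have := hom _ _ H2; rewrite leNgt H1.
Qed.

Lemma cdf_le1 (R : realType) (G : R -> R) : is_cdf G -> forall x, G x <= 1.
Proof.
move=> [hom [_ [_ hP]]] x.
rewrite leNgt; apply/negP => Gx.
have h1 : \forall t \near +oo, G t < G x by apply: cvgr_lt hP _ Gx.
have h2 : \forall y \near +oo, x <= y.
  by exists x; split; [exact: num_real| move=> y /ltW].
have [y [/= H1 H2]] := filter_ex (filterI h1 h2).
by have := hom _ _ H2; rewrite leNgt H1.
Qed.

Lemma fmaxpowE (R : realType) (G : R -> R) (x : R) (k : nat) :
  0 <= G x <= 1 -> (0 < k)%N ->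
  fmaxpow G k x = Num.max 0 (1 - k%:R * (1 - G x)).
Proof.
move=> /andP[g0 g1]; elim: k => [//|[|k] IH _].
  rewrite /= mul1r opprB addrC subrK; by rewrite max_r.
change (fmaxconv (fmaxpow G k.+1) G x = Num.max 0 (1 - k.+2%:R * (1 - G x))).
rewrite /fmaxconv IH //.
set t := 1 - G x.
have t0 : 0 <= t by rewrite subr_ge0.
rewrite -[k.+2]addn1 natrD.
case: (leP 0 (1 - k.+1%:R * t)) => h.
  congr (Num.max _ _); rewrite /t; ring.
rewrite max_l; last by rewrite /t; lra.
rewrite max_l //.
have : 0 <= k.+1%:R * t by rewrite mulr_ge0.
rewrite /t in h *; nra.
Qed.

Lemma bern (R : realFieldType) (t : R) (n : nat) : 0 <= t <= 1 ->
  1 - n%:R * t <= (1 - t) ^+ n.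
Proof.
move=> /andP[t0 t1]; elim: n => [|n IH]; first by rewrite mul0r subr0 expr0.
rewrite exprS.
have h1 : 0 <= 1 - t by rewrite subr_ge0.
have := ler_wpM2l h1 IH.
have n0 : 0 <= n%:R :> R by [].
rewrite -addn1 natrD => h2.
apply: le_trans h2.
have : 0 <= n%:R * t * t by rewrite !mulr_ge0.
lra.
Qed.

Lemma cvg_max0 (R : realType) (u : nat -> R) (l : R) :
  u @ \oo --> l -> (fun k => Num.max 0 (u k)) @ \oo --> Num.max 0 l.
Proof.
move=> hu; rewrite maxr_absE.
under eq_fun => k do rewrite maxr_absE.
apply: cvgM; last exact: cvg_cst.
apply: cvgD; first by apply: cvgD => //; exact: cvg_cst.
by apply: cvg_norm; apply: cvgB => //; exact: cvg_cst.
Qed.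

Lemma near_pos (R : realType) : \forall k \near \oo, (0 < k)%N.
Proof. by exists 1%N. Qed.

Lemma key (R : realType) (y : nat -> R) (L : R) :
  (forall k, (0 < k)%N -> 0 <= y k <= 1) ->
  (fun k => y k ^+ k) @ \oo --> L ->
  (fun k => Num.max 0 (1 - k%:R * (1 - y k))) @ \oo --> onePlusLogPos L.
Proof.
move=> y01 hy.
have L0 : 0 <= L.
  rewrite leNgt; apply/negP => L0.
  have h1 : \forall k \near \oo, y k ^+ k < 0 by apply: cvgr_lt hy _ L0.
  have [k [/= H1 H2]] := filter_ex (filterI h1 (near_pos R)).
  have /andP[+ _] := y01 k H2 => /(exprn_ge0 k); by rewrite leNgt H1.
move: L0; rewrite le0r => /orP[/eqP L0|Lpos].
  subst L.
  rewrite /onePlusLogPos eqxx.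
  apply: (@squeeze_cvgr _ _ _ _ (fun=> 0) (fun k => y k ^+ k)); last exact: hy; last exact: cvg_cst.
  near=> k.
  have kp : (0 < k)%N by near: k; exact: near_pos.
  have /andP[a b] := y01 k kp.
  rewrite le_max lexx /= ge_max exprn_ge0 //=.
  rewrite [X in _ <= X ^+ _](_ : y k = 1 - (1 - y k)); last by ring.
  by apply: bern; apply/andP; split; lra.
rewrite /onePlusLogPos gt_eqF //.
apply: cvg_max0.
have hpos : \forall k \near \oo, 0 < y k /\ (0 < k)%N.
  have h1 : \forall k \near \oo, 0 < y k ^+ k by apply: cvgr_gt hy _ Lpos.
  near=> k.
  have kp : (0 < k)%N by near: k; exact: near_pos.
  split => //.
  have /andP[a _] := y01 k kp.
  rewrite lt0r a andbT; apply/eqP => y0.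
  have : 0 < y k ^+ k by near: k; exact: h1.
  rewrite y0 expr0n; move: kp; rewrite lt0n => /negPf ->.
  by rewrite ltxx.
have hlnk : (fun k => ln (y k ^+ k)) @ \oo --> ln L.
  exact: (cvg_comp _ _ hy (continuous_ln Lpos)).
pose b k := k%:R * - ln (y k).
have hbc : b @ \oo --> - ln L.
  apply: cvg_trans (cvgN hlnk); apply: near_eq_cvg.
  near=> k.
  have [yp kp] : 0 < y k /\ (0 < k)%N by near: k; exact: hpos.
  rewrite /b. change (- ln (y k ^+ k) = k%:R * - ln (y k)). rewrite lnXn //. by rewrite mulrN mulr_natl.
have hinv : (fun k : nat => (k%:R : R)^-1) @ \oo --> 0.
  apply/(gtr0_cvgV0 _).2; first by near=> k; rewrite ltr0n; near: k; exact: near_pos.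
  exact: cvgr_idn.
have key1 : forall z : R, 0 < z -> 1 - z <= - ln z.
  move=> z z0; have h : -1 < z - 1 by lra.
  have := @le_ln1Dx R (z - 1) h.
  rewrite (_ : 1 + (z - 1) = z); last by ring.
  lra.
have key2 : forall z : R, 0 < z -> - ln z <= (1 - z) / z.
  move=> z z0; rewrite -lnV ?posrE //.
  have := key1 z^-1; rewrite invr_gt0 => /(_ z0).
  rewrite lnV ?posrE // opprK => h.
  by rewrite mulrBl divff ?gt_eqF // mul1r; lra.
have ht0 : (fun k => 1 - y k) @ \oo --> 0.
  apply: (@squeeze_cvgr _ _ _ _ (fun=> 0) (fun k => b k * (k%:R)^-1)); last first.
  - by have := cvgM hbc hinv; rewrite mulr0 => h; apply: h.
  - exact: cvg_cst.
  near=> k.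
  have [yp kp] : 0 < y k /\ (0 < k)%N by near: k; exact: hpos.
  have /andP[a c] := y01 k kp.
  rewrite subr_ge0 c /= /b mulrC mulrA mulVf ?pnatr_eq0 -?lt0n // mul1r.
  exact: key1.
have hy1 : y @ \oo --> (1:R).
  have e : y = (fun k => 1 - (1 - y k)) by apply: funext => k; ring.
  rewrite e; have := cvgB (cvg_cst (1:R)) ht0; rewrite subr0; exact.
have hb : (fun k => k%:R * (1 - y k)) @ \oo --> - ln L.
  apply: (@squeeze_cvgr _ _ _ _ (fun k => b k - b k * ((1 - y k) * (y k)^-1)) b); last first.
  - exact: hbc.
  - have := cvgB hbc (cvgM hbc (cvgM ht0 (cvgV (oner_neq0 R) hy1))).
    by rewrite mul0r mulr0 subr0 => h; apply: h.
  near=> k.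
  have [yp kp] : 0 < y k /\ (0 < k)%N by near: k; exact: hpos.
  have /andP[a c] := y01 k kp.
  have k0 : 0 <= k%:R :> R by [].
  have A := key1 _ yp.
  have B := key2 _ yp.
  set t := 1 - y k in A B *.
  set u := t / y k in B *.
  set m := - ln (y k) in A B *.
  have ut : u * y k = t by rewrite /u divfK ?gt_eqF.
  have u0 : 0 <= u by rewrite /u divr_ge0 // /t subr_ge0.
  have t0 : 0 <= t by rewrite /t subr_ge0.
  rewrite /b -/m.
  have tE : t = 1 - y k by [].
  clearbody u t m.
  apply/andP; split.
    have h1 : k%:R * (m - t) <= k%:R * (u - t) by apply: ler_wpM2l; lra.
    have h2 : u - t = u * t by rewrite -{1}ut tE; ring.
    have h3 : k%:R * (u * t) <= k%:R * (u * m) by apply: ler_wpM2l => //; apply: ler_wpM2l.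
    nra.
  by apply: ler_wpM2l.
rewrite -[ln L]opprK.
exact: cvgB (cvg_cst (1:R)) hb.
Unshelve. all: end_near.
Qed.

Theorem mainTheorem7 (R : realType) (Fs : nat -> R -> R) (F : R -> R) :
  (forall k : nat, (0 < k)%N -> is_cdf (Fs k)) ->
  is_cdf F ->
  (forall x : R, {for x, continuous F} ->
     (fun k : nat => Fs k x ^+ k) @ \oo --> F x) ->
  forall x : R, {for x, continuous F} ->
    (fun k : nat => fmaxpow (Fs k) k x) @ \oo --> onePlusLogPos (F x).
Proof.
move=> hFs hF hconv x cx.
have y01 : forall k, (0 < k)%N -> 0 <= Fs k x <= 1.
  by move=> k kp; rewrite cdf_ge0 ?cdf_le1 //; exact: hFs.
have H := @key R _ _ y01 (hconv x cx).
apply: cvg_trans H.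
apply: near_eq_cvg; near=> k.
have kp : (0 < k)%N by near: k; exact: near_pos.
by rewrite fmaxpowE // y01.
Unshelve. all: end_near.
Qed.
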